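(* Let $(X,d)$ be a metric space and $x_0\in X$. Let $\ell:X\to[0,+\infty)$ be defined by $\ell(x_0)=0$ and $\ell(x)=1$ for all $x\neq x_0$. Then $X$ is complete if and only if the equation $(\mathcal{G}_0)$ with data $\ell$ has a unique solution, namely $u_0(x)=d(x,x_0)$.
   Context: Global slope: $G[u](x)=\sup_{y\neq x}\frac{(u(x)-u(y))_+}{d(x,y)}$ if $u(x)<+\infty$, $G[u](x)=+\infty$ otherwise ($\alpha_+=\max\{\alpha,0\}$). Equation $(\mathcal{G}_0)$ with data $\ell$: a solution is a lower semicontinuous $u:X\to\mathbb{R}\cup\{+\infty\}$ with $\inf_X u=0$ and $G[u](x)=\ell(x)$ for all $x\in X$. *)

(* Defs.v *)
From Stdlib Require Import Reals.
From Coquelicot Require Import Coquelicot.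
Open Scope R_scope.

Definition is_metric {X : Type} (d : X -> X -> R) : Prop :=
  (forall x y, 0 <= d x y) /\
  (forall x y, d x y = 0 <-> x = y) /\
  (forall x y, d x y = d y x) /\
  (forall x y z, d x z <= d x y + d y z).

Definition metric_complete {X : Type} (d : X -> X -> R) : Prop :=
  forall s : nat -> X,
    (forall eps, 0 < eps -> exists N : nat, forall m n, (N <= m)%nat -> (N <= n)%nat ->
        d (s m) (s n) < eps) ->
    exists x, forall eps, 0 < eps -> exists N : nat, forall n, (N <= n)%nat -> d (s n) x < eps.

Definition lsc {X : Type} (d : X -> X -> R) (u : X -> Rbar) : Prop :=
  forall x (c : R), Rbar_lt c (u x) ->
    exists delta, 0 < delta /\ forall y, d x y < delta -> Rbar_lt c (u y).

(* The quotient (u(x)-u(y))_+ / d(x,y), for u(x) finite = a; if u(y)=+oo the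
   positive part is 0. *)
Definition slope_term {X : Type} (d : X -> X -> R) (u : X -> Rbar) (a : R) (x y : X) : R :=
  match u y with
  | Finite b => Rmax (a - b) 0 / d x y
  | _ => 0
  end.

(* Global slope G[u](x) = sup_{y<>x} (u(x)-u(y))_+/d(x,y) if u(x) < +oo, +oo otherwise.
   The value 0 is added to the set (all terms are >= 0) so that the supremum over an
   empty index set is 0. *)
Definition global_slope {X : Type} (d : X -> X -> R) (u : X -> Rbar) (x : X) : Rbar :=
  match u x with
  | Finite a => Lub_Rbar (fun r => r = 0 \/ exists y, y <> x /\ r = slope_term d u a x y)
  | _ => p_infty
  end.

Definition inf_X {X : Type} (u : X -> Rbar) : Rbar :=
  Glb_Rbar (fun r => exists x, u x = Finite r).

Definition is_solution_G0 {X : Type} (d : X -> X -> R) (l : X -> R) (u : X -> Rbar) : Prop :=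
  (forall x, u x <> m_infty) /\
  lsc d u /\
  inf_X u = Finite 0 /\
  (forall x, global_slope d u x = Finite (l x)).

(* Main.v *)
Require Import Defs.
From Stdlib Require Import Reals Lra Lia Psatz Classical IndefiniteDescription FunctionalExtensionality.
From Coquelicot Require Import Coquelicot.
Open Scope R_scope.

Lemma Rmax_div_le (a b c : R) : 0 < b -> a <= c * b -> 0 <= c -> Rmax a 0 / b <= c.
Proof.
  intros Hb H Hc.
  assert (Rmax a 0 <= c*b) by (apply Rmax_lub; nra).
  apply Rmult_le_reg_r with b; auto.
  replace (Rmax a 0 / b * b) with (Rmax a 0) by (field; lra). lra.
Qed.

Lemma div_le_inv (a b c : R): 0<b -> Rmax a 0 / b <= c -> a <= c * b.
Proof.
  intros Hb H.
  assert (E: Rmax a 0 = (Rmax a 0 / b) * b) by (field; lra).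
  assert (a <= Rmax a 0) by apply Rmax_l.
  assert ((Rmax a 0 / b) * b <= c * b) by (apply Rmult_le_compat_r; lra).
  lra.
Qed.

Lemma lt_div (a b c : R): 0<b -> c*b < a -> c < Rmax a 0 / b.
Proof.
  intros Hb H. assert (a <= Rmax a 0) by apply Rmax_l.
  apply Rmult_lt_reg_r with b; auto.
  replace (Rmax a 0 / b * b) with (Rmax a 0) by (field; lra). lra.
Qed.

Lemma lub_char (E : R -> Prop) (c : R) :
  (forall r, E r -> r <= c) -> (forall eps, 0 < eps -> exists r, E r /\ c - eps < r) ->
  Lub_Rbar E = Finite c.
Proof.
  intros Hub Happ. apply is_lub_Rbar_unique. split.
  - intros r Hr. simpl. auto.
  - intros b Hb. destruct b as [b| |]; simpl; auto.
    + destruct (Rle_dec c b) as [h|h]; auto.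
      destruct (Happ (c - b)) as [r [Hr Hr']]; [lra|].
      specialize (Hb r Hr). simpl in Hb. lra.
    + destruct (Happ 1) as [r [Hr _]]; [lra|]. exact (Hb r Hr).
Qed.

Lemma lub_ub (E : R -> Prop) (c : R) : Lub_Rbar E = Finite c -> forall r, E r -> r <= c.
Proof.
  intros H r Hr. destruct (Lub_Rbar_correct E) as [Hu _]. rewrite H in Hu.
  exact (Hu r Hr).
Qed.

Lemma lub_le (E : R -> Prop) (c : R) : (forall r, E r -> r <= c) -> Rbar_le (Lub_Rbar E) c.
Proof.
  intros H. destruct (Lub_Rbar_correct E) as [_ Hl]. apply Hl. intros r Hr. simpl. auto.
Qed.

Lemma gs_real {X : Type} (d : X -> X -> R) (v : X -> R) (x : X) :
  global_slope d (fun x => Finite (v x)) x =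
  Lub_Rbar (fun r => r = 0 \/ exists y, y <> x /\ r = Rmax (v x - v y) 0 / d x y).
Proof. reflexivity. Qed.

Lemma dpos {X : Type} (d : X -> X -> R) x y : is_metric d -> x <> y -> 0 < d x y.
Proof.
  intros [Hnn [Hid _]] H. destruct (Rle_lt_or_eq_dec 0 (d x y) (Hnn x y)); auto.
  exfalso. apply H. apply Hid. auto.
Qed.

Lemma drefl {X : Type} (d : X -> X -> R) x : is_metric d -> d x x = 0.
Proof. intros [_ [Hid _]]. apply Hid. auto. Qed.

Lemma sol_real {X : Type} (d : X -> X -> R) (x0 : X) (l : X -> R) (v : X -> R) :
  is_metric d -> l x0 = 0 -> (forall x, x <> x0 -> l x = 1) ->
  (forall x y, v x - v y <= d x y) -> (forall x, 0 <= v x) -> v x0 = 0 ->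
  (forall x, x <> x0 -> forall th, 0 < th -> exists y, y <> x /\ (1 - th) * d x y < v x - v y) ->
  is_solution_G0 d l (fun x => Finite (v x)).
Proof.
  intros Hm Hl0 Hl1 Hlip Hnn Hv0 Happ.
  split; [intros x; discriminate|].
  split.
  { intros x c Hc. simpl in Hc. exists (v x - c). split; [lra|].
    intros y Hy. simpl. specialize (Hlip x y). lra. }
  split.
  { unfold inf_X. apply is_glb_Rbar_unique. split.
    - intros r [x Hx]. injection Hx as Hx. subst r. simpl. auto.
    - intros b Hb. apply Hb. exists x0. rewrite Hv0. auto. }
  intros x. rewrite gs_real.
  destruct (classic (x = x0)) as [->|Hx].
  - rewrite Hl0. apply lub_char.
    + intros r [->|[y [Hy ->]]]; [lra|].
      rewrite Rmax_right by (specialize (Hnn y); lra). unfold Rdiv. lra.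
    + intros eps He. exists 0. split; [left; auto|lra].
  - rewrite (Hl1 x Hx). apply lub_char.
    + intros r [->|[y [Hy ->]]]; [lra|].
      apply Rmax_div_le; [apply dpos; auto | rewrite Rmult_1_l; auto | lra].
    + intros eps He. destruct (Happ x Hx eps He) as [y [Hy Hlt]].
      exists (Rmax (v x - v y) 0 / d x y). split; [right; eauto|].
      apply lt_div; [apply dpos; auto| ]. lra.
Qed.

Definition Sr {X : Type} (d : X -> X -> R) (v : X -> R) (e : R) (a b : X) : Prop :=
  v b + e * d b a <= v a.

Lemma Sr_trans {X : Type} (d : X -> X -> R) v e a b c :
  is_metric d -> 0 < e -> Sr d v e a b -> Sr d v e b c -> Sr d v e a c.
Proof.
  intros [_ [_ [_ Htri]]] He H1 H2. unfold Sr in *.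
  specialize (Htri c b a). nra.
Qed.

Lemma Sr_refl {X : Type} (d : X -> X -> R) v e a : is_metric d -> Sr d v e a a.
Proof. intros Hm. unfold Sr. rewrite drefl by auto. lra. Qed.

Lemma step_ex {X : Type} (d : X -> X -> R) v e (dl : R) (a : X) :
  is_metric d -> (forall x, 0 <= v x) -> 0 < dl ->
  exists b, Sr d v e a b /\ forall w, Sr d v e a w -> v b <= v w + dl.
Proof.
  intros Hm Hnn Hdl.
  set (E := fun r => exists w, Sr d v e a w /\ r = v w).
  destruct (Glb_Rbar_correct E) as [Hlb Hgr].
  assert (H0 : Rbar_le 0 (Glb_Rbar E)).
  { apply Hgr. intros r [w [_ ->]]. simpl. auto. }
  assert (Ha : Rbar_le (Glb_Rbar E) (v a)).
  { apply Hlb. exists a. split; auto. apply Sr_refl; auto. }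
  destruct (Glb_Rbar E) as [m| |]; simpl in H0, Ha; try contradiction.
  assert (Hn : ~ is_lb_Rbar E (m + dl)).
  { intros H. specialize (Hgr _ H). simpl in Hgr. lra. }
  apply not_all_ex_not in Hn. destruct Hn as [r Hr].
  apply imply_to_and in Hr. destruct Hr as [[w [Hw ->]] Hr].
  simpl in Hr. exists w. split; auto.
  intros w' Hw'. specialize (Hlb (v w') (ex_intro _ w' (conj Hw' eq_refl))).
  simpl in Hlb. lra.
Qed.

Lemma half_pow_small (y : R) : 0 < y -> exists N, forall n, (n >= N)%nat -> (1/2)^n < y.
Proof.
  intros Hy. destruct (pow_lt_1_zero (1/2)) with y as [N HN]; auto.
  { rewrite Rabs_right; lra. }
  exists N. intros n Hn. specialize (HN n Hn). rewrite Rabs_right in HN; auto.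
  apply Rle_ge, pow_le. lra.
Qed.

Lemma ekeland {X : Type} (d : X -> X -> R) (v : X -> R) (e : R) :
  is_metric d -> metric_complete d -> (forall x y, v x - v y <= d x y) ->
  (forall x, 0 <= v x) -> 0 < e -> e <= 1 -> forall z0,
  exists z, v z + e * d z z0 <= v z0 /\ forall y, y <> z -> v z - v y <= e * d z y.
Proof.
  intros Hm Hc Hlip Hnn He He1 z0.
  pose proof Hm as [Hdnn [Hid [Hsym Htri]]].
  assert (HF : exists F : nat -> X -> X, forall n a,
    Sr d v e a (F n a) /\ forall w, Sr d v e a w -> v (F n a) <= v w + (1/2)^n).
  { assert (Hh : 0 < 1/2) by lra.
    exists (fun n a => proj1_sig (constructive_indefinite_description _
        (step_ex d v e ((1/2)^n) a Hm Hnn (pow_lt _ n Hh)))).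
    intros n a. match goal with |- context [proj1_sig ?t] => exact (proj2_sig t) end. }
  destruct HF as [F HF].
  set (zs := fun n => nat_rect (fun _ => X) z0 (fun k z => F k z) n).
  assert (Hz0 : zs 0%nat = z0) by reflexivity.
  assert (HzS : forall n, zs (S n) = F n (zs n)) by reflexivity.
  clearbody zs.
  assert (P3 : forall n k, Sr d v e (zs n) (zs (k + n)%nat)).
  { intros n k. induction k.
    - apply Sr_refl; auto.
    - simpl. rewrite HzS. eapply Sr_trans; eauto. apply HF. }
  assert (P4 : forall n w, Sr d v e (zs (S n)) w -> e * d w (zs (S n)) <= (1/2)^n).
  { intros n w Hw. rewrite HzS in Hw |- *.
    destruct (HF n (zs n)) as [H1 H2].
    specialize (H2 w (Sr_trans d v e _ _ _ Hm He H1 Hw)). unfold Sr in Hw. lra. }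
  assert (P5 : forall n m, (m >= S n)%nat -> e * d (zs m) (zs (S n)) <= (1/2)^n).
  { intros n m Hmn. apply P4. replace m with ((m - S n) + S n)%nat by lia. apply P3. }
  destruct (Hc zs) as [z Hz].
  { intros eps Heps. destruct (half_pow_small (e * eps / 2)) as [N HN]; [nra|].
    exists (S N). intros m k Hm1 Hk1.
    pose proof (P5 N m Hm1). pose proof (P5 N k Hk1). pose proof (HN N (le_n N)).
    pose proof (Htri (zs m) (zs (S N)) (zs k)). rewrite (Hsym (zs (S N)) (zs k)) in H2.
    assert (e * d (zs m) (zs k) < e * eps) by nra.
    apply Rmult_lt_reg_l with e; auto. }
  assert (Q1 : forall n, Sr d v e (zs n) z).
  { intros n. unfold Sr. apply Rle_plus_epsilon. intros eta Heta.
    destruct (Hz (eta/2)) as [N HN]; [lra|].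
    pose proof (P3 n N) as H1. unfold Sr in H1.
    assert (H2 : d (zs (N + n)%nat) z < eta / 2) by (apply HN; lia).
    pose proof (Hlip z (zs (N+n)%nat)) as H3.
    rewrite (Hsym z) in H3.
    pose proof (Htri z (zs (N+n)%nat) (zs n)) as H4. rewrite (Hsym z (zs (N+n)%nat)) in H4.
    pose proof (Hdnn (zs (N+n)%nat) z).
    assert (e * d z (zs n) <= e * d (zs (N + n)%nat) z + e * d (zs (N + n)%nat) (zs n)).
    { rewrite <- Rmult_plus_distr_l. apply Rmult_le_compat_l; lra. }
    assert (e * d (zs (N + n)%nat) z <= 1 * d (zs (N + n)%nat) z) by (apply Rmult_le_compat_r; lra).
    lra. }
  exists z. split.
  { specialize (Q1 0%nat). rewrite Hz0 in Q1. exact Q1. }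
  intros y Hy. apply Rnot_lt_le. intros Hlt. apply Hy.
  assert (Hs : Sr d v e z y). { unfold Sr. rewrite Hsym. lra. }
  apply Hid. apply Rle_antisym; [|apply Hdnn].
  apply Rle_plus_epsilon. intros eta Heta.
  destruct (half_pow_small (e * eta / 2)) as [N1 HN1]; [nra|].
  destruct (Hz (eta/2)) as [N2 HN2]; [lra|].
  pose proof (P4 (N1 + N2)%nat y (Sr_trans d v e _ _ _ Hm He (Q1 _) Hs)).
  assert ((1/2)^(N1+N2) < e * eta / 2) by (apply HN1; lia).
  assert (d (zs (S (N1 + N2))) z < eta/2) by (apply HN2; lia).
  pose proof (Htri y (zs (S (N1 + N2))) z).
  assert (e * d y (zs (S (N1 + N2))) < e * (eta/2)) by lra.
  assert (d y (zs (S (N1 + N2))) < eta/2) by (apply Rmult_lt_reg_l with e; auto).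
  lra.
Qed.

Lemma uniq_fwd {X : Type} (d : X -> X -> R) (x0 : X) (l : X -> R) :
  is_metric d -> l x0 = 0 -> (forall x, x <> x0 -> l x = 1) -> metric_complete d ->
  forall u, is_solution_G0 d l u -> forall x, u x = Finite (d x x0).
Proof.
  intros Hm Hl0 Hl1 Hc u [_ [_ [Hinf Hgs]]].
  pose proof Hm as [Hdnn [Hid [Hsym Htri]]].
  assert (Hfin : forall x, u x = Finite (real (u x))).
  { intros x. specialize (Hgs x). unfold global_slope in Hgs.
    destruct (u x); simpl; auto; discriminate. }
  set (v := fun x => real (u x)).
  assert (Hu : u = fun x => Finite (v x)).
  { apply functional_extensionality. intros x. apply Hfin. }
  clearbody v. subst u. clear Hfin.
  intros x. f_equal.
  assert (Hmin : forall y, v x0 <= v y).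
  { intros y. destruct (classic (y = x0)) as [->|Hy]; [lra|].
    specialize (Hgs x0). rewrite gs_real, Hl0 in Hgs.
    pose proof (lub_ub _ _ Hgs (Rmax (v x0 - v y) 0 / d x0 y)) as H.
    assert (H' := div_le_inv _ _ _ (dpos d x0 y Hm (not_eq_sym Hy)) (H (or_intror (ex_intro _ y (conj Hy eq_refl))))).
    lra. }
  assert (Hv0 : v x0 = 0).
  { unfold inf_X in Hinf.
    assert (Glb_Rbar (fun r => exists x, Finite (v x) = Finite r) = Finite (v x0)).
    { apply is_glb_Rbar_unique. split.
      - intros r [y Hy]. injection Hy as <-. simpl. auto.
      - intros b Hb. apply Hb. exists x0. auto. }
    rewrite H in Hinf. injection Hinf. auto. }
  assert (Hnn : forall y, 0 <= v y) by (intros y; rewrite <- Hv0; auto).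
  assert (Hlip : forall a b, v a - v b <= d a b).
  { intros a b. destruct (classic (a = x0)) as [->|Ha].
    { specialize (Hmin b). specialize (Hdnn x0 b). lra. }
    destruct (classic (b = a)) as [->|Hb].
    { specialize (Hdnn a a). lra. }
    specialize (Hgs a). rewrite gs_real, (Hl1 a Ha) in Hgs.
    pose proof (lub_ub _ _ Hgs (Rmax (v a - v b) 0 / d a b)) as H.
    assert (H' := div_le_inv _ _ _ (dpos d a b Hm (not_eq_sym Hb)) (H (or_intror (ex_intro _ b (conj Hb eq_refl))))).
    lra. }
  destruct (classic (x = x0)) as [->|Hx].
  { rewrite drefl; auto. }
  pose proof (Hlip x x0). 
  apply Rle_antisym; [lra|].
  apply Rnot_lt_le. intros Hlt.
  set (D := d x x0).
  assert (HD : 0 < D) by (apply dpos; auto).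
  set (e := (v x / D + 1) / 2).
  assert (Hvd : v x / D < 1).
  { apply Rmult_lt_reg_r with D; auto. replace (v x / D * D) with (v x) by (field; lra). fold D in Hlt. lra. }
  assert (Hvd0 : 0 <= v x / D) by (apply Rdiv_le_0_compat; auto).
  assert (He : 0 < e) by (unfold e; lra).
  assert (He1 : e <= 1) by (unfold e; lra).
  assert (HeD : v x < e * D).
  { unfold e. replace ((v x / D + 1) / 2 * D) with ((v x + D)/2) by (field; lra). fold D in Hlt. lra. }
  destruct (ekeland d v e Hm Hc Hlip Hnn He He1 x) as [z [Hz1 Hz2]].
  destruct (classic (z = x0)) as [->|Hz].
  { rewrite Hv0, Hsym in Hz1. fold D in Hz1. lra. }
  specialize (Hgs z). rewrite gs_real, (Hl1 z Hz) in Hgs.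
  assert (Hle : Rbar_le (Finite 1) (Finite e)).
  { rewrite <- Hgs. apply lub_le. intros r [->|[y [Hy ->]]]; [lra|].
    apply Rmax_div_le; [apply dpos; auto| |lra].
    apply (Hz2 y). auto. }
  simpl in Hle. unfold e in Hle. lra.
Qed.

Lemma limit_fun {X : Type} (d : X -> X -> R) (s : nat -> X) :
  is_metric d ->
  (forall eps, 0 < eps -> exists N : nat, forall m n, (N <= m)%nat -> (N <= n)%nat ->
        d (s m) (s n) < eps) ->
  ~ (exists x, forall eps, 0 < eps -> exists N : nat, forall n, (N <= n)%nat -> d (s n) x < eps) ->
  exists f : X -> R, (forall x, 0 < f x) /\ (forall x y, f x - f y <= d x y) /\
    (forall x eta, 0 < eta -> exists y, f y < eta /\ d x y < f x + eta).
Proof.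
  intros Hm Hcs Hno.
  pose proof Hm as [Hdnn [Hid [Hsym Htri]]].
  assert (Hcc : forall x, Cauchy_crit (fun n => d x (s n))).
  { intros x eps Heps. destruct (Hcs eps Heps) as [N HN]. exists N.
    intros n m Hn Hmm. unfold Rdist. specialize (HN n m Hn Hmm).
    pose proof (Htri x (s m) (s n)). pose proof (Htri x (s n) (s m)).
    rewrite (Hsym (s m) (s n)) in H.
    apply Rabs_def1; lra. }
  assert (Hf : exists f : X -> R, forall x, Un_cv (fun n => d x (s n)) (f x)).
  { exists (fun x => proj1_sig (Rcomplete.R_complete _ (Hcc x))).
    intros x. match goal with |- context [proj1_sig ?t] => exact (proj2_sig t) end. }
  destruct Hf as [f Hf].
  assert (Hf' : forall x eps, 0 < eps -> exists N, forall n, (N <= n)%nat ->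
     d x (s n) < f x + eps /\ f x - eps < d x (s n)).
  { intros x eps Heps. destruct (Hf x eps Heps) as [N HN]. exists N.
    intros n Hn. specialize (HN n Hn). unfold Rdist in HN. apply Rabs_def2 in HN. lra. }
  exists f. split; [|split].
  - intros x. apply Rnot_le_lt. intros Hle. apply Hno. exists x.
    intros eps Heps. destruct (Hf' x eps Heps) as [N HN]. exists N.
    intros n Hn. rewrite Hsym. specialize (HN n Hn). lra.
  - intros x y. apply Rle_plus_epsilon. intros eps Heps.
    destruct (Hf' x (eps/2)) as [N1 H1]; [lra|].
    destruct (Hf' y (eps/2)) as [N2 H2]; [lra|].
    assert (A1 := H1 (N1 + N2)%nat ltac:(lia)).
    assert (A2 := H2 (N1 + N2)%nat ltac:(lia)).
    pose proof (Htri x y (s (N1 + N2)%nat)). lra.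
  - intros x eta Heta.
    destruct (Hcs (eta/2)) as [Nc Hc]; [lra|].
    destruct (Hf' x eta Heta) as [Nx Hx].
    set (n := (Nc + Nx)%nat).
    exists (s n). split.
    + destruct (Hf' (s n) (eta/2)) as [M HM]; [lra|].
      assert (A1 := HM (M + Nc)%nat ltac:(lia)).
      assert (A2 := Hc n (M + Nc)%nat ltac:(unfold n; lia) ltac:(lia)).
      lra.
    + apply Hx. unfold n. lia.
Qed.

Theorem corollary3p12 (X : Type) (d : X -> X -> R) (x0 : X) (l : X -> R) :
  is_metric d ->
  l x0 = 0 ->
  (forall x, x <> x0 -> l x = 1) ->
  (metric_complete d <->
   (is_solution_G0 d l (fun x => Finite (d x x0)) /\
    forall u, is_solution_G0 d l u -> forall x, u x = Finite (d x x0))).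
Proof.
  intros Hm Hl0 Hl1.
  pose proof Hm as [Hdnn [Hid [Hsym Htri]]].
  assert (Hsol0 : is_solution_G0 d l (fun x => Finite (d x x0))).
  { apply (sol_real d x0); auto.
    - intros x y. pose proof (Htri x y x0). lra.
    - apply drefl; auto.
    - intros x Hx th Hth. exists x0. split; auto. rewrite drefl by auto.
      pose proof (dpos d x x0 Hm Hx). nra. }
  split.
  - intros Hc. split; auto. apply uniq_fwd; auto.
  - intros [_ Huniq] s Hcs. apply NNPP. intros Hno.
    destruct (limit_fun d s Hm Hcs Hno) as [f [Hfp [Hflip Happ]]].
    set (v := fun y => Rmin (d y x0) (f y)).
    assert (Hsol : is_solution_G0 d l (fun y => Finite (v y))).
    { apply (sol_real d x0); auto.
      - intros x y. unfold v. pose proof (Htri x y x0). pose proof (Hflip x y).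
        unfold Rmin. destruct (Rle_dec (d x x0) (f x)); destruct (Rle_dec (d y x0) (f y)); lra.
      - intros x. unfold v. apply Rmin_glb; auto. left; auto.
      - unfold v. rewrite drefl by auto. apply Rmin_left. left; auto.
      - intros x Hx th Hth. unfold v.
        destruct (Rle_dec (d x x0) (f x)) as [h|h].
        + rewrite (Rmin_left _ _ h). exists x0. split; auto.
          rewrite drefl by auto. rewrite Rmin_left by (left; auto).
          pose proof (dpos d x x0 Hm Hx). nra.
        + rewrite (Rmin_right (d x x0) (f x)) by lra.
          pose proof (Hfp x) as Hfx.
          set (eta := Rmin (f x / 2) (th * f x / 4)).
          assert (He1 : eta <= f x / 2) by apply Rmin_l.
          assert (He2 : eta <= th * f x / 4) by apply Rmin_r.
          assert (He0 : 0 < eta) by (apply Rmin_glb_lt; nra).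
          destruct (Happ x eta He0) as [y [Hy1 Hy2]].
          exists y. split.
          { intros ->. lra. }
          pose proof (Rmin_r (d y x0) (f y)).
          pose proof (Hdnn x y).
          destruct (Rle_dec th 1).
          * assert ((1 - th) * d x y <= (1 - th) * (f x + eta)) by (apply Rmult_le_compat_l; lra).
            nra.
          * nra. }
    specialize (Huniq _ Hsol).
    set (eta := f x0 / 4).
    assert (He : 0 < eta) by (specialize (Hfp x0); unfold eta; lra).
    destruct (Happ x0 eta He) as [y [Hy1 Hy2]].
    specialize (Huniq y). injection Huniq as Hv. unfold v in Hv.
    pose proof (Hflip x0 y). rewrite Hsym in Hy2.
    assert (f y < d y x0) by (rewrite (Hsym x0 y) in H; unfold eta in *; lra).
    rewrite Rmin_right in Hv by lra. lra.
Qed.
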